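(* Let $\bm{\mu}\in X^{\mathcal{L}(\mathcal{T})}$ satisfy (i) $V_{s_0}(\bm{\mu})\neq\theta$ and (ii) the maximizer $\bm{w}\in\Delta$ of $\inf_{\bm{\lambda}\in\mathrm{Alt}(\bm{\mu})}\sum_\ell w_\ell d(\mu_\ell,\lambda_\ell)$ is unique. Then for every $\epsilon>0$ there exists $\xi>0$ such that for all $\bm{\mu}'\in X^{\mathcal{L}(\mathcal{T})}$ with $\mu'_\ell\in[\mu_\ell-\xi,\mu_\ell+\xi]$ for every $\ell\in\mathcal{L}(\mathcal{T})$, \[\max_{\ell\in\mathcal{L}(\mathcal{T})}|w^{s_0}_\ell(\bm{\mu}')-w^{s_0}_\ell(\bm{\mu})|<\epsilon.\]
   Context: $\mathcal{T}$: finite rooted tree, node set $S$, root $s_0$, children $\mathcal{C}(s)$, leaves $\mathcal{L}(\mathcal{T})$, $\mathcal{D}(s)$ leaves descending from $s$; internal labels $L(s)\in\{\text{MAX},\text{MIN}\}$. $X\subseteq\mathbb{R}$ mean-parameter set of a one-parameter exponential family, $d(x,y)$ KL divergence between members with means $x,y$, threshold $\theta\in X$. $V_s(\bm{\lambda})=\lambda_s$ at leaves, max/min of children's values at MAX/MIN nodes; $a_s=$'win' iff $V_s\ge\theta$. $\Delta$ simplex over leaves; $\mathrm{Alt}(\bm{\mu})=\{\bm{\lambda}\in X^{\mathcal{L}(\mathcal{T})}:a_{s_0}(\bm{\lambda})\neq a_{s_0}(\bm{\mu})\}$. For any mean vector $\bm{\nu}$ (applied to both $\bm{\mu}$ and $\bm{\mu}'$),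 recursive weights: $a^*=a_{s_0}(\bm{\nu})$; $P=$MAX, $Q=$MIN if $a^*=$'win', swapped if 'lose'. Leaf $s$: $w^s_s=1$, $d_s=d(\nu_s,\theta)$ if ($a^*=$'win', $\nu_s\ge\theta$) or ($a^*=$'lose', $\nu_s<\theta$), else $0$. $L(s)=P$: $d_s=\max_c d_c$, $c^*(s)\in\arg\max_c d_c$, if $d_s>0$: $w^s=w^{c^*(s)}$ on $\mathcal{D}(c^*(s))$, $0$ elsewhere. $L(s)=Q$, all $d_c>0$: $d_s=(\sum_c1/d_c)^{-1}$, $w^s_\ell=\frac{w^c_\ell/d_c}{\sum_{c'}1/d_{c'}}$ on $\mathcal{D}(c)$. $L(s)=Q$ otherwise: $d_s=0$. Internal $s$ with $d_s=0$: $\bm{w}^s$ arbitrary probability vector on $\mathcal{D}(s)$. (These recursive values solve $\max_{\bm{w}}\inf_{\bm{\lambda}\in\mathrm{Alt}}\sum_\ell w_\ell d(\nu_\ell,\lambda_\ell)$.) *)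

(* Defs.v *)
From HB Require Import structures.
From mathcomp Require Import all_boot all_order all_algebra.
From mathcomp Require Import all_classical all_reals.
From mathcomp Require Import topology normedtype derive.
Set Implicit Arguments. Unset Strict Implicit. Unset Printing Implicit Defensive.
Import Order.TTheory GRing.Theory Num.Theory.
Import numFieldNormedType.Exports.
Local Open Scope classical_set_scope.
Local Open Scope ring_scope.

(* Finite rooted game trees.  An internal node carries its label       *)
(* (true = MAX, false = MIN) and the ordered list of its children.     *)
(* Nodes are addressed by paths (seq nat) from the root s0 = [::];     *)
(* the child number i of node p is  rcons p i.                          *)
Inductive tree := Leaf | Node of bool & seq tree.

Fixpoint subtree (t : tree) (p : seq nat) {struct t} : option tree :=
  match p, t with
  | [::], _ => Some t
  | _ :: _, Leaf => None
  | i :: p', Node _ cs =>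
      (fix walk (cs : seq tree) (i : nat) {struct cs} : option tree :=
         match cs, i with
         | c :: _, 0 => subtree c p'
         | _ :: cs', j.+1 => walk cs' j
         | [::], _ => None
         end) cs i
  end.

Fixpoint wf_tree (t : tree) : bool :=
  match t with
  | Leaf => true
  | Node _ cs => (size cs != 0%N) && all wf_tree cs
  end.

Fixpoint leaves (t : tree) : seq (seq nat) :=
  match t with
  | Leaf => [:: [::]]
  | Node _ cs =>
      (fix go (cs : seq tree) (i : nat) {struct cs} : seq (seq nat) :=
         match cs with
         | [::] => [::]
         | c :: cs' => map (cons i) (leaves c) ++ go cs' i.+1
         end) cs 0%N
  end.

Section Game.
Variable R : realType.

(* V_s(lambda): minimax value of the tree, lambda is indexed by leaf paths *)
Fixpoint gval (t : tree) (lam : seq nat -> R) {struct t} : R :=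
  match t with
  | Leaf => lam [::]
  | Node b cs =>
      odflt 0
      ((fix go (cs : seq tree) (i : nat) {struct cs} : option R :=
         match cs with
         | [::] => None
         | c :: cs' =>
             let v := gval c (fun p => lam (i :: p)) in
             Some (match go cs' i.+1 with
                   | None => v
                   | Some u => if b then Num.max v u else Num.min v u
                   end)
         end) cs 0%N)
  end.

(* a_{s0}(lambda) = 'win'  <->  win t th lam = true *)
Definition win (t : tree) (th : R) (lam : seq nat -> R) : bool := th <= gval t lam.

(* Natural parameter space Th (open interval), log-partition A.        *)
Definition expfam (Th : set R) (A : R -> R) : Prop :=
  [/\ open Th, is_interval Th, Th !=set0,
      (forall e, Th e -> derivable A e 1) &
      (forall e1 e2, Th e1 -> Th e2 -> e1 < e2 -> derive1 A e1 < derive1 A e2)].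

Definition meanset (Th : set R) (A : R -> R) : set R := derive1 A @` Th.

Definition natpar (Th : set R) (A : R -> R) (x : R) : R :=
  xget 0 [set e | Th e /\ derive1 A e = x].

(* KL divergence KL(p_x || p_y) between members with means x, y :
   A(eta_y) - A(eta_x) - (eta_y - eta_x) A'(eta_x), with A'(eta_x) = x *)
Definition kl (Th : set R) (A : R -> R) (x y : R) : R :=
  let ex := natpar Th A x in let ey := natpar Th A y in
  A ey - A ex - (ey - ex) * x.

Definition simplex (t : tree) : set (seq nat -> R) :=
  [set w | (forall l, l \in leaves t -> 0 <= w l) /\
           \sum_(l <- leaves t) w l = 1].

Definition Alt (t : tree) (X : set R) (th : R) (mu : seq nat -> R)
  : set (seq nat -> R) :=
  [set lam | (forall l, l \in leaves t -> X (lam l)) /\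
             win t th lam != win t th mu].

Definition maxmin_obj (t : tree) (X : set R) (d : R -> R -> R) (th : R)
  (mu w : seq nat -> R) : R :=
  inf [set \sum_(l <- leaves t) w l * d (mu l) (lam l)
      | lam in Alt t X th mu].

Definition is_maximizer (t : tree) (X : set R) (d : R -> R -> R) (th : R)
  (mu w : seq nat -> R) : Prop :=
  simplex t w /\
  forall w', simplex t w' -> maxmin_obj t X d th mu w' <= maxmin_obj t X d th mu w.

(* D p = d_p and W p = w^p (extended by 0 outside D(p)) for each node p,
   computed for mean vector nu.  Arbitrary choices (argmax c*(s),
   arbitrary probability vector when d_s = 0) are left free.          *)
Definition probvec_on (t : tree) (p : seq nat) (w : seq nat -> R) : Prop :=
  (forall l, l \in leaves t -> prefix p l -> 0 <= w l) /\
  (forall l, l \in leaves t -> ~~ prefix p l -> w l = 0) /\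
  \sum_(l <- leaves t | prefix p l) w l = 1.

Definition rec_weights (t : tree) (d : R -> R -> R) (th : R)
  (nu : seq nat -> R) (D : seq nat -> R) (W : seq nat -> seq nat -> R) : Prop :=
  let astar := win t th nu in
  forall p,
  match subtree t p with
  | None => True
  | Some Leaf =>
      D p = (if (astar && (th <= nu p)) || (~~ astar && (nu p < th))
             then d (nu p) th else 0) /\
      (forall l, l \in leaves t -> W p l = (l == p)%:R)
  | Some (Node b cs) =>
      let n := size cs in
      (if b == astar then (* L(s) = P *)
         [/\ (exists2 i, (i < n)%N & D (rcons p i) = D p),
             (forall i, (i < n)%N -> D (rcons p i) <= D p) &
             (0 < D p ->
              exists2 i, ((i < n)%N /\ D (rcons p i) = D p) &
                forall l, l \in leaves t ->
                  W p l = if prefix (rcons p i) l then W (rcons p i) l else 0)]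
       else (* L(s) = Q *)
         if [forall i : 'I_n, 0 < D (rcons p i)] then
           let S := \sum_(i < n) (D (rcons p i))^-1 in
           D p = S^-1 /\
           (forall l, l \in leaves t ->
              W p l = \sum_(i < n)
                 (if prefix (rcons p i) l
                  then W (rcons p i) l / D (rcons p i) / S else 0))
         else D p = 0) /\
      (D p = 0 -> probvec_on t p (W p))
  end.

End Game.

(* Main.v *)
Require Import Defs.
From HB Require Import structures.
From mathcomp Require Import all_boot all_order all_algebra.
From mathcomp Require Import all_classical all_reals.
From mathcomp Require Import topology normedtype derive.
From mathcomp Require Import zify ring lra.
Set Implicit Arguments. Unset Strict Implicit. Unset Printing Implicit Defensive.
Import Order.TTheory GRing.Theory Num.Theory.
Import numFieldNormedType.Exports.
Local Open Scope classical_set_scope.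
Local Open Scope ring_scope.
Lemma tree_ind' (P : tree -> Prop) : P Leaf ->
  (forall b cs, (forall i, (i < size cs)%N -> P (nth Leaf cs i)) -> P (Node b cs)) ->
  forall t, P t.
Proof.
move=> HL HN; fix IH 1; case=> [|b cs]; first exact HL. apply: HN.
refine ((fix F (cs : seq tree) : forall i, (i < size cs)%N -> P (nth Leaf cs i) :=
  match cs with [::] => fun i Hi => _ | c :: cs' => fun i => match i with 0%N => fun _ => IH c | i'.+1 => fun Hi => F cs' i' Hi end end) cs).
move: Hi; rewrite ltn0 => Hi; discriminate Hi.
Qed.

Lemma subtree_node b cs i q : subtree (Node b cs) (i :: q) =
  if (i < size cs)%N then subtree (nth Leaf cs i) q else None.
Proof. by rewrite /=; elim: cs i => [|c cs IH] [|i] //=; rewrite IH. Qed.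

Lemma subtree_cat t p q : subtree t (p ++ q) = obind (fun s => subtree s q) (subtree t p).
Proof.
elim: p t => [|i p IH] [|b cs] //.
rewrite cat_cons !subtree_node; case: ifP => //.
Qed.

Lemma subtree_nil t : subtree t [::] = Some t.
Proof. by case: t. Qed.

Lemma subtree_rcons t p b cs i : subtree t p = Some (Node b cs) ->
  subtree t (rcons p i) = if (i < size cs)%N then Some (nth Leaf cs i) else None.
Proof.
move=> H; transitivity (subtree (Node b cs) [:: i]); first by rewrite -cats1 subtree_cat H.
by rewrite subtree_node subtree_nil.
Qed.

Lemma leaves_node b cs : leaves (Node b cs) =
  flatten [seq map (cons i) (leaves (nth Leaf cs i)) | i <- iota 0 (size cs)].
Proof.
have H : forall k, (fix go (cs : seq tree) (i : nat) {struct cs} : seq (seq nat) :=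
         match cs with
         | [::] => [::]
         | c :: cs' => map (cons i) (leaves c) ++ go cs' i.+1
         end) cs k =
   flatten [seq map (cons (k + i)%N) (leaves (nth Leaf cs i)) | i <- iota 0 (size cs)].
  elim: cs => [|c cs IH] k //=.
  rewrite IH addn0 -(addn0 1%N) iotaDl -map_comp; congr (_ ++ flatten _).
  apply: eq_map => i /=; rewrite add0n; congr (map (cons _) _); lia.
by rewrite /= H.
Qed.


Lemma flatten_single (F : nat -> seq (seq nat)) i m n :
  flatten [seq (if j == i then F j else [::]) | j <- iota m n] =
  if (m <= i < m + n)%N then F i else [::].
Proof.
elim: n m => [|n IH] m /=; first by case: ifP => //; lia.
rewrite IH; case: eqVneq => [->|/eqP ne] /=.
  by rewrite ltnn /= cats0 leqnn addnS ltnS leq_addr.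
case: ifP; case: ifP => //; lia.
Qed.

Lemma filter_prefix_leaves t p : [seq l <- leaves t | prefix p l] =
  if subtree t p is Some s then map (cat p) (leaves s) else [::].
Proof.
elim: p t => [|i p IH] t.
  rewrite subtree_nil map_id; apply/all_filterP/allP => l _; exact: prefix0s.
case: t => [|b cs] //.
rewrite leaves_node filter_flatten -map_comp subtree_node.
rewrite (eq_map (g := fun j => if j == i then map (cons j) [seq l <- leaves (nth Leaf cs j) | prefix p l] else [::])); last first.
  move=> j /=; rewrite filter_map; case: eqVneq => [->|ne].
    by congr map; apply: eq_filter => l /=; rewrite eqxx.
  by rewrite (eq_filter (a2 := pred0)) ?filter_pred0 // => l /=; rewrite eq_sym (negbTE ne).
rewrite flatten_single /= add0n; case: ifP => // _.
rewrite IH; case: (subtree _ p) => // s; rewrite -map_comp; done.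
Qed.

Lemma subtree_leaves t p s q : subtree t p = Some s -> q \in leaves s -> p ++ q \in leaves t.
Proof.
move=> H Hq; have : p ++ q \in [seq l <- leaves t | prefix p l].
  by rewrite filter_prefix_leaves H; apply: map_f.
by rewrite mem_filter => /andP[].
Qed.

Lemma filter_leaf t p : subtree t p = Some Leaf -> [seq l <- leaves t | prefix p l] = [:: p].
Proof. by move=> H; rewrite filter_prefix_leaves H /= cats0. Qed.

Lemma filter_node t p b cs : subtree t p = Some (Node b cs) ->
  [seq l <- leaves t | prefix p l] =
  flatten [seq [seq l <- leaves t | prefix (rcons p i) l] | i <- iota 0 (size cs)].
Proof.
move=> H; rewrite filter_prefix_leaves H leaves_node map_flatten -map_comp.
congr flatten; apply/eq_in_map => i; rewrite mem_iota add0n => /andP[_ Hi] /=.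
rewrite filter_prefix_leaves (subtree_rcons _ H) Hi -map_comp.
by apply: eq_map => q /=; rewrite cat_rcons.
Qed.

Lemma prefix_rconsW (p : seq nat) i l : prefix (rcons p i) l -> prefix p l.
Proof. by apply: prefix_trans; apply: prefix_rcons. Qed.

Lemma prefix_rcons_nth (p : seq nat) i l : prefix (rcons p i) l -> nth 0%N l (size p) = i /\ (size p < size l)%N.
Proof.
case/prefixP => s ->; rewrite cat_rcons nth_cat ltnn subnn size_cat /=; split => //.
by rewrite addnS ltnS leq_addr.
Qed.

Lemma prefix_rcons_inj (p : seq nat) i j l : prefix (rcons p i) l -> prefix (rcons p j) l -> i = j.
Proof. by move=> /prefix_rcons_nth[<- _] /prefix_rcons_nth[<- _]. Qed.

Lemma leaf_in_child t p b cs l : subtree t p = Some (Node b cs) -> l \in leaves t -> prefix p l ->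
  exists2 i, (i < size cs)%N & prefix (rcons p i) l.
Proof.
move=> H Hl Hp; have : l \in [seq l <- leaves t | prefix p l] by rewrite mem_filter Hp.
rewrite (filter_node H) => /flattenP[s /mapP[i]]; rewrite mem_iota add0n => /andP[_ Hi] -> .
by rewrite mem_filter => /andP[Hp' _]; exists i.
Qed.

Lemma wf_subtree t p s : wf_tree t -> subtree t p = Some s -> wf_tree s.
Proof.
elim: p t => [|i p IH] t; first by rewrite subtree_nil => ? [<-].
case: t => [|b cs] //= /andP[_ /(all_nthP Leaf) Hall].
rewrite -/(subtree (Node b cs) (i :: p)) subtree_node; case: ifP => // Hi.
by apply: IH; apply: Hall.
Qed.

Section Sums.
Variable (V : nmodType).
Lemma sum_leaf t p (F : seq nat -> V) : subtree t p = Some Leaf ->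
  \sum_(l <- leaves t | prefix p l) F l = F p.
Proof. by move=> H; rewrite -big_filter (filter_leaf H) big_seq1. Qed.

Lemma sum_node t p b cs (F : seq nat -> V) : subtree t p = Some (Node b cs) ->
  \sum_(l <- leaves t | prefix p l) F l =
  \sum_(i < size cs) \sum_(l <- leaves t | prefix (rcons p i) l) F l.
Proof.
move=> H; rewrite -big_filter (filter_node H) big_flatten big_map /=.
have -> : iota 0 (size cs) = index_iota 0 (size cs) by rewrite /index_iota subn0.
by rewrite big_mkord; apply: eq_bigr => i _; rewrite big_filter.
Qed.
End Sums.

Section GvalR.
Variable R : realType.

Lemma gval_node_spec b cs (lam : seq nat -> R) : (0 < size cs)%N ->
  (exists2 i, (i < size cs)%N &
     gval (Node b cs) lam = gval (nth Leaf cs i) (fun q => lam (i :: q))) /\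
  (forall i, (i < size cs)%N ->
     if b then gval (nth Leaf cs i) (fun q => lam (i :: q)) <= gval (Node b cs) lam
     else gval (Node b cs) lam <= gval (nth Leaf cs i) (fun q => lam (i :: q))).
Proof.
have H : forall k, (0 < size cs)%N -> exists v,
  (fix go (cs : seq tree) (i : nat) {struct cs} : option R :=
         match cs with
         | [::] => None
         | c :: cs' =>
             let v := gval c (fun p => lam (i :: p)) in
             Some (match go cs' i.+1 with
                   | None => v
                   | Some u => if b then Num.max v u else Num.min v u
                   end)
         end) cs k = Some v /\
  (exists2 i, (i < size cs)%N & v = gval (nth Leaf cs i) (fun q => lam ((k + i)%N :: q))) /\
  (forall i, (i < size cs)%N ->
     if b then gval (nth Leaf cs i) (fun q => lam ((k + i)%N :: q)) <= v
     else v <= gval (nth Leaf cs i) (fun q => lam ((k + i)%N :: q))).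
  elim: cs => [|c cs IH] k // _.
  case: cs IH => [|c' cs] IH.
    exists (gval c (fun p => lam (k :: p))); split => //; split.
      by exists 0%N => //; rewrite addn0.
    by clear IH; case=> [|i] // _; rewrite addn0; case: b.
  have [v [Hv [[i Hi Hvi] Hb]]] := IH k.+1 isT.
  rewrite Hv; eexists; split; first reflexivity.
  clear IH Hv.
  split.
    case: b Hb => Hb.
      rewrite /Num.max; case: ifP => _.
        by exists i.+1 => //; rewrite Hvi addnS.
      by exists 0%N => //; rewrite addn0.
    rewrite /Num.min; case: ifP => _.
      by exists 0%N => //; rewrite addn0.
    by exists i.+1 => //; rewrite Hvi addnS.
  case=> [|j] Hj.
    by rewrite addn0; case: b {Hb}; [rewrite le_max lexx | rewrite ge_min lexx].
  have := Hb j Hj; rewrite -addSnnS /=.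
  case: b {Hb} => Hj'; first by rewrite le_max Hj' orbT.
  by rewrite ge_min Hj' orbT.
move=> Hcs; have [v [Hv [[i Hi Hvi] Hb]]] := H 0%N Hcs.
rewrite /= Hv /=; split; first by exists i => //; rewrite Hvi add0n.
by move=> j Hj; have := Hb j Hj; rewrite add0n.
Qed.

Lemma mem_leaves_node b cs i q : (i < size cs)%N -> q \in leaves (nth Leaf cs i) ->
  i :: q \in leaves (Node b cs).
Proof.
move=> Hi Hq; rewrite leaves_node; apply/flattenP.
exists (map (cons i) (leaves (nth Leaf cs i))); last exact: map_f.
by apply/mapP; exists i => //; rewrite mem_iota.
Qed.

Lemma lip_aux (b : bool) (v1 v2 x1 x2 y1 y2 xi : R) : v1 = x1 -> v2 = y2 ->
  (if b then y1 <= v1 else v1 <= y1) -> (if b then x2 <= v2 else v2 <= x2) ->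
  `|x1 - x2| <= xi -> `|y1 - y2| <= xi -> `|v1 - v2| <= xi.
Proof.
move=> -> ->; rewrite !ler_norml => H1 H2 /andP[? ?] /andP[? ?].
by case: b H1 H2 => ? ?; apply/andP; split; lra.
Qed.

Lemma gval_lip s (l1 l2 : seq nat -> R) xi : 0 <= xi ->
  (forall q, q \in leaves s -> `|l1 q - l2 q| <= xi) -> `|gval s l1 - gval s l2| <= xi.
Proof.
move=> xi0; elim/tree_ind': s l1 l2 => [|b cs IH] l1 l2 H; first by apply: H; rewrite inE.
case: (posnP (size cs)) => [/size0nil -> //|Hcs]; first by rewrite /= subrr normr0.
have Hc : forall i, (i < size cs)%N ->
   `|gval (nth Leaf cs i) (fun q => l1 (i :: q)) - gval (nth Leaf cs i) (fun q => l2 (i :: q))| <= xi.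
  by move=> i Hi; apply: IH => // q Hq; apply: H; apply: mem_leaves_node.
have [[i Hi E1] B1] := gval_node_spec b l1 Hcs.
have [[j Hj E2] B2] := gval_node_spec b l2 Hcs.
exact: lip_aux E1 E2 (B1 j Hj) (B2 i Hi) (Hc i Hi) (Hc j Hj).
Qed.

Lemma gval_ext s (l1 l2 : seq nat -> R) :
  (forall q, q \in leaves s -> l1 q = l2 q) -> gval s l1 = gval s l2.
Proof.
move=> H; apply/eqP; rewrite -subr_eq0 -normr_le0; apply: gval_lip => // q Hq.
by rewrite H // subrr normr0.
Qed.

Definition val_at t (p : seq nat) (lam : seq nat -> R) : R :=
  if subtree t p is Some s then gval s (fun q => lam (p ++ q)) else 0.

Lemma val_at_node t p b cs (lam : seq nat -> R) : wf_tree t -> subtree t p = Some (Node b cs) ->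
  (exists2 i, (i < size cs)%N & val_at t p lam = val_at t (rcons p i) lam) /\
  (forall i, (i < size cs)%N ->
     if b then val_at t (rcons p i) lam <= val_at t p lam
     else val_at t p lam <= val_at t (rcons p i) lam).
Proof.
move=> wf H; have /= /andP[Hn _] := wf_subtree wf H.
rewrite -lt0n in Hn.
have [[i Hi E] B] := gval_node_spec b (fun q => lam (p ++ q)) Hn.
rewrite /val_at H; split.
  by exists i => //; rewrite (subtree_rcons _ H) Hi E; congr gval; apply: funext => q; rewrite cat_rcons.
move=> j Hj; rewrite (subtree_rcons _ H) Hj.
have -> : (fun q => lam (rcons p j ++ q)) = (fun q => lam (p ++ j :: q)) by apply: funext => q; rewrite cat_rcons.
exact: B.
Qed.

Lemma val_at_leaf t p (lam : seq nat -> R) : subtree t p = Some Leaf -> val_at t p lam = lam p.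
Proof. by move=> H; rewrite /val_at H /= cats0. Qed.

Lemma val_at_root t (lam : seq nat -> R) : val_at t [::] lam = gval t lam.
Proof. by rewrite /val_at subtree_nil. Qed.

Lemma val_at_ext t p (l1 l2 : seq nat -> R) :
  (forall l, l \in leaves t -> prefix p l -> l1 l = l2 l) -> val_at t p l1 = val_at t p l2.
Proof.
move=> H; rewrite /val_at; case E: (subtree t p) => [s|] //.
apply: gval_ext => q Hq; apply: H; first exact: subtree_leaves E Hq.
exact: prefix_prefix.
Qed.

Lemma ext_max n (x : nat -> R) v (P : R -> bool) :
  (exists2 i, (i < n)%N & v = x i) -> (forall i, (i < n)%N -> x i <= v) ->
  ((forall a b, a <= b -> P a -> P b) -> (P v <-> exists2 i, (i < n)%N & P (x i))) /\
  ((forall a b, a <= b -> P b -> P a) -> (P v <-> forall i, (i < n)%N -> P (x i))).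
Proof.
move=> [i Hi ->] Hle; split=> HP; split.
- by move=> ?; exists i.
- by case=> j Hj; apply: HP; apply: Hle.
- by move=> Pv j Hj; apply: HP Pv; apply: Hle.
- by move=> Hall; apply: Hall.
Qed.

Lemma ext_min n (x : nat -> R) v (P : R -> bool) :
  (exists2 i, (i < n)%N & v = x i) -> (forall i, (i < n)%N -> v <= x i) ->
  ((forall a b, a <= b -> P a -> P b) -> (P v <-> forall i, (i < n)%N -> P (x i))) /\
  ((forall a b, a <= b -> P b -> P a) -> (P v <-> exists2 i, (i < n)%N & P (x i))).
Proof.
move=> [i Hi ->] Hle; split=> HP; split.
- by move=> Pv j Hj; apply: HP Pv; apply: Hle.
- by move=> Hall; apply: Hall.
- by move=> ?; exists i.
- by case=> j Hj; apply: HP; apply: Hle.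
Qed.

Definition flip (a : bool) (th v : R) : bool := if a then v < th else th <= v.
Definition sopp (a : bool) (th v : R) : bool := if a then th < v else v < th.

Lemma flip_node t p b cs a th (lam : seq nat -> R) : wf_tree t -> subtree t p = Some (Node b cs) ->
  (flip a th (val_at t p lam) <->
   if b == a then forall i, (i < size cs)%N -> flip a th (val_at t (rcons p i) lam)
   else exists2 i, (i < size cs)%N & flip a th (val_at t (rcons p i) lam)).
Proof.
move=> wf H; have [E B] := val_at_node lam wf H; clear H.
have Hf_t : forall x y, x <= y -> flip true th y -> flip true th x by rewrite /flip => x y ? ?; lra.
have Hf_f : forall x y, x <= y -> flip false th x -> flip false th y by rewrite /flip => x y ? ?; lra.
case: a; case: b B => B /=.
- exact: (proj2 (ext_max (flip true th) E B) Hf_t).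
- exact: (proj2 (ext_min (flip true th) E B) Hf_t).
- exact: (proj1 (ext_max (flip false th) E B) Hf_f).
- exact: (proj1 (ext_min (flip false th) E B) Hf_f).
Qed.

Lemma sopp_node t p b cs a th (lam : seq nat -> R) : wf_tree t -> subtree t p = Some (Node b cs) ->
  (sopp a th (val_at t p lam) <->
   if b == a then exists2 i, (i < size cs)%N & sopp a th (val_at t (rcons p i) lam)
   else forall i, (i < size cs)%N -> sopp a th (val_at t (rcons p i) lam)).
Proof.
move=> wf H; have [E B] := val_at_node lam wf H; clear H.
have Hs_t : forall x y, x <= y -> sopp true th x -> sopp true th y by rewrite /sopp => x y ? ?; lra.
have Hs_f : forall x y, x <= y -> sopp false th y -> sopp false th x by rewrite /sopp => x y ? ?; lra.
case: a; case: b B => B /=.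
- exact: (proj1 (ext_max (sopp true th) E B) Hs_t).
- exact: (proj1 (ext_min (sopp true th) E B) Hs_t).
- exact: (proj2 (ext_max (sopp false th) E B) Hs_f).
- exact: (proj2 (ext_min (sopp false th) E B) Hs_f).
Qed.
End GvalR.
Section KL.
Variables (R : realType) (Th : set R) (A : R -> R).
Hypothesis HE : expfam Th A.
Local Notation X := (meanset Th A).
Local Notation g := (natpar Th A).
Local Notation d := (kl Th A).
Local Notation A' := (derive1 A).

Lemma minle_l (x y : R) : Num.min x y <= x. Proof. by rewrite ge_min lexx. Qed.
Lemma minle_r (x y : R) : Num.min x y <= y. Proof. by rewrite ge_min lexx orbT. Qed.

Lemma Th_open : open Th. Proof. by case: HE. Qed.
Lemma Th_int : is_interval Th. Proof. by case: HE. Qed.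
Lemma A'_lt e1 e2 : Th e1 -> Th e2 -> e1 < e2 -> A' e1 < A' e2.
Proof. by case: HE => _ _ _ _; apply. Qed.
Lemma A'_le e1 e2 : Th e1 -> Th e2 -> e1 <= e2 -> A' e1 <= A' e2.
Proof. by move=> H1 H2; rewrite le_eqVlt => /orP[/eqP ->//|/(A'_lt H1 H2)/ltW]. Qed.
Lemma A_der e : Th e -> derivable A e 1.
Proof. by case: HE => _ _ _ H _; apply: H. Qed.

Lemma X_A' e : Th e -> X (A' e).
Proof. by move=> He; exists e. Qed.

Lemma natparP x : X x -> Th (g x) /\ A' (g x) = x.
Proof. by case=> e He <-; rewrite /natpar; apply: (xgetPex 0 (P := [set e0 | Th e0 /\ A' e0 = A' e])); exists e. Qed.

Lemma natpar_id e : Th e -> g (A' e) = e.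
Proof.
move=> He; have [H1 H2] := natparP (X_A' He).
case: (ltgtP (g (A' e)) e) => // H.
  by have := A'_lt H1 He H; rewrite H2 ltxx.
by have := A'_lt He H1 H; rewrite H2 ltxx.
Qed.

Lemma natpar_lt x y : X x -> X y -> x < y -> g x < g y.
Proof.
move=> Hx Hy Hxy; have [Tx Ex] := natparP Hx; have [Ty Ey] := natparP Hy.
rewrite ltNge; apply/negP => H; have := A'_le Ty Tx H; rewrite Ex Ey; lra.
Qed.

Lemma natpar_le x y : X x -> X y -> x <= y -> g x <= g y.
Proof. by move=> Hx Hy; rewrite le_eqVlt => /orP[/eqP ->//|/(natpar_lt Hx Hy)/ltW]. Qed.

Lemma contA e : Th e -> {for e, continuous A}.
Proof. by move=> He; apply: differentiable_continuous; apply/derivable1_diffP; apply: A_der. Qed.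

Lemma in_Th e1 e2 c : Th e1 -> Th e2 -> e1 <= c <= e2 -> Th c.
Proof. by move=> H1 H2 Hc; apply: (Th_int H1 H2). Qed.

Lemma mvtA e1 e2 : Th e1 -> Th e2 -> e1 < e2 ->
  exists2 c, e1 < c < e2 & A e2 - A e1 = A' c * (e2 - e1).
Proof.
move=> H1 H2 H12.
have Hd : forall x, x \in `]e1, e2[%R -> is_derive x 1 A (A' x).
  move=> x Hx; rewrite derive1E; apply: derivableP; apply: A_der.
  by apply: (in_Th H1 H2); move: Hx; rewrite in_itv /= => /andP[? ?]; apply/andP; split; apply: ltW.
have Hc : {within `[e1, e2], continuous A}.
  apply: continuous_in_subspaceT => x; rewrite inE /= in_itv /= => Hx; apply: contA.
  exact: (in_Th H1 H2).
have [c Hc' E] := MVT H12 Hd Hc.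
by exists c => //; move: Hc'; rewrite in_itv.
Qed.

Definition hfun x e := A e - A (g x) - (e - g x) * x.

Lemma kl_h x y : d x y = hfun x (g y). Proof. by []. Qed.

Lemma hfun_at x : hfun x (g x) = 0.
Proof. by rewrite /hfun !subrr mul0r subrr. Qed.

Lemma hfun_incr x e1 e2 : X x -> Th e1 -> Th e2 -> g x <= e1 -> e1 < e2 -> hfun x e1 < hfun x e2.
Proof.
move=> Hx H1 H2 Hxe H12; have [c /andP[Hc1 Hc2] E] := mvtA H1 H2 H12.
have [Tx Ex] := natparP Hx.
have Tc : Th c by apply: (in_Th H1 H2); rewrite !ltW.
have : x < A' c by rewrite -{1}Ex; apply: A'_lt => //; apply: le_lt_trans Hxe Hc1.
move=> Hxc; have : 0 < (A' c - x) * (e2 - e1) by apply: mulr_gt0; rewrite subr_gt0.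
rewrite /hfun; move: E; set a := A' c; move=> E; nra.
Qed.

Lemma hfun_decr x e1 e2 : X x -> Th e1 -> Th e2 -> e2 <= g x -> e1 < e2 -> hfun x e2 < hfun x e1.
Proof.
move=> Hx H1 H2 Hxe H12; have [c /andP[Hc1 Hc2] E] := mvtA H1 H2 H12.
have [Tx Ex] := natparP Hx.
have Tc : Th c by apply: (in_Th H1 H2); rewrite !ltW.
have : A' c < x by rewrite -{1}Ex; apply: A'_lt => //; apply: lt_le_trans Hc2 Hxe.
move=> Hxc; have : 0 < (x - A' c) * (e2 - e1) by apply: mulr_gt0; rewrite subr_gt0.
rewrite /hfun; move: E; set a := A' c; move=> E; nra.
Qed.

Lemma kl_xx x : d x x = 0.
Proof. by rewrite kl_h hfun_at. Qed.

Lemma kl_gt0 x y : X x -> X y -> x != y -> 0 < d x y.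
Proof.
move=> Hx Hy Hne; have [Tx Ex] := natparP Hx; have [Ty Ey] := natparP Hy.
rewrite kl_h -(hfun_at x); case: (ltgtP (g x) (g y)) => H.
- exact: hfun_incr.
- exact: hfun_decr.
- by move: Hne; rewrite -Ex -Ey H eqxx.
Qed.

Lemma kl_ge0 x y : X x -> X y -> 0 <= d x y.
Proof.
move=> Hx Hy; case: (eqVneq x y) => [->|H]; first by rewrite kl_xx.
exact/ltW/kl_gt0.
Qed.

Lemma kl_win x y z : X x -> X y -> X z -> z < y -> y <= x -> d x y <= d x z.
Proof.
move=> Hx Hy Hz Hzy Hyx; rewrite !kl_h; apply/ltW; apply: hfun_decr => //.
- by case: (natparP Hz).
- by case: (natparP Hy).
- exact: natpar_le.
- exact: natpar_lt.
Qed.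

Lemma kl_lose x y z : X x -> X y -> X z -> x < y -> y <= z -> d x y <= d x z.
Proof.
move=> Hx Hy Hz Hxy Hyz; rewrite !kl_h.
case: (eqVneq y z) => [->//|Hne].
have Hlt : y < z by rewrite lt_neqAle Hne.
apply/ltW; apply: hfun_incr => //.
- by case: (natparP Hy).
- by case: (natparP Hz).
- exact/ltW/natpar_lt.
- exact: natpar_lt.
Qed.

Lemma open_ball e : Th e -> exists2 r, 0 < r & forall e', `|e - e'| < r -> Th e'.
Proof.
move=> He; have := Th_open; rewrite openE => /(_ e He) H.
have [r r0 Hr] := iffLR (nbhs_ballP e Th) H.
by exists r => // e' He'; apply: Hr; rewrite -ball_normE /ball_norm.
Qed.

Lemma cont_eps (f : R -> R) e : {for e, continuous f} -> forall eps, 0 < eps ->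
  exists2 delta, 0 < delta & forall e', `|e - e'| < delta -> `|f e - f e'| < eps.
Proof.
move=> Hf eps He; have H := (cvgrPdist_lt _ _).1 Hf eps He.
have [del del0 Hdel] := iffLR (nbhs_ballP _ _) (H _).
by exists del => // e' He'; apply: Hdel; rewrite -ball_normE /ball_norm.
Qed.

Lemma kl_below x y eps : X x -> X y -> 0 < eps ->
  exists z, [/\ X z, z < y & d x z <= d x y + eps].
Proof.
move=> Hx Hy He; have [Ty Ey] := natparP Hy; set ey := g y in Ty Ey *.
have [r r0 Hr] := open_ball Ty.
have [del del0 Hdel] := cont_eps (eps := eps / 2) (contA Ty) ltac:(lra).
set m := Num.min (Num.min (r / 2) (del / 2)) (eps / (2 * (`|x| + 1))).
have Hn : 0 <= `|x| by [].
have m0 : 0 < m by rewrite !lt_min !divr_gt0 //; lra.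
have mr : m < r by rewrite /m !gt_min (_ : r / 2 < r) //; lra.
have md : m < del by rewrite /m !gt_min (_ : del / 2 < del) ?orbT //; lra.
have me : m * (2 * (`|x| + 1)) <= eps.
  by rewrite -ler_pdivlMr ?minle_r //; lra.
have Te : Th (ey - m) by apply: Hr; rewrite opprB addrC subrK gtr0_norm.
exists (A' (ey - m)); split.
- exact: X_A'.
- by rewrite -{1}Ey; apply: A'_lt => //; lra.
rewrite !kl_h natpar_id // -/ey /hfun.
have := Hdel (ey - m); rewrite opprB addrC subrK gtr0_norm // => /(_ md).
rewrite ltr_norml => /andP[H1 H2].
have Hxm : m * x <= m * `|x| by apply: ler_wpM2l; [exact: ltW | exact: ler_norm].
nra.
Qed.

Lemma natpar_cont x0 : X x0 -> forall eps, 0 < eps ->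
  exists2 delta, 0 < delta & forall x, X x -> `|x - x0| < delta -> `|g x - g x0| < eps.
Proof.
move=> Hx0 eps He; have [T0 E0] := natparP Hx0; set e0 := g x0 in T0 E0 *.
have [r r0 Hr] := open_ball T0.
set m := Num.min eps r / 2.
have m0 : 0 < m by rewrite divr_gt0 // lt_min He.
have me : m < eps by have := minle_l eps r; rewrite /m in m0 *; lra.
have mr : m < r by have := minle_r eps r; rewrite /m in m0 *; lra.
have Tm : Th (e0 - m) by apply: Hr; rewrite opprB addrC subrK gtr0_norm.
have Tp : Th (e0 + m) by apply: Hr; rewrite opprD addNKr normrN gtr0_norm.
have Lm : A' (e0 - m) < x0 by rewrite -{1}E0; apply: A'_lt => //; lra.
have Lp : x0 < A' (e0 + m) by rewrite -{1}E0; apply: A'_lt => //; lra.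
exists (Num.min (x0 - A' (e0 - m)) (A' (e0 + m) - x0)).
  by rewrite lt_min !subr_gt0 Lm Lp.
move=> x Hx; rewrite lt_min => /andP[Ha Hb].
have /andP[Hc Hd] : A' (e0 - m) < x < A' (e0 + m).
  by move: Ha Hb; rewrite !ltr_norml => /andP[? ?] /andP[? ?]; apply/andP; split; lra.
have := natpar_lt (X_A' Tm) Hx Hc; have := natpar_lt Hx (X_A' Tp) Hd.
rewrite !natpar_id // => ? ?; rewrite ltr_norml; apply/andP; split; lra.
Qed.

Lemma kl_cont th x0 eps : X th -> X x0 -> 0 < eps ->
  exists2 delta, 0 < delta & forall x, X x -> `|x - x0| < delta -> `|d x th - d x0 th| < eps.
Proof.
move=> Hth Hx0 He; have [T0 E0] := natparP Hx0.
set u0 := g x0 in T0 E0 *; set et := g th.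
set K := `|et - u0|; set M := `|x0| + 1.
have K0 : 0 <= K by exact: normr_ge0.
have M0 : 0 < M by rewrite /M; have := normr_ge0 x0; lra.
have [dA dA0 HA] := cont_eps (eps := eps / 3) (contA T0) ltac:(lra).
set eta := Num.min dA (eps / (3 * M)).
have eta0 : 0 < eta by rewrite lt_min dA0 divr_gt0 //; lra.
have [dg dg0 Hg] := natpar_cont Hx0 eta0.
exists (Num.min (Num.min dg 1) (eps / (3 * (K + 1)))).
  by rewrite !lt_min dg0 ltr01 divr_gt0 //; lra.
move=> x Hx; rewrite !lt_min => /andP[/andP[H1 H2] H3].
have Hu := Hg x Hx H1; set u := g x in Hu *.
have E : d x th - d x0 th = (A u0 - A u) + (et - u0) * (x0 - x) + (u - u0) * x.
  by rewrite /kl -/u -/u0 -/et; ring.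
rewrite E.
have B1 : `|A u0 - A u| < eps / 3.
  by apply: HA; rewrite distrC; apply: lt_le_trans Hu _; exact: minle_l.
have B2 : `|(et - u0) * (x0 - x)| <= eps / 3.
  rewrite normrM -/K distrC.
  have : `|x - x0| * (3 * (K + 1)) < eps by rewrite -ltr_pdivlMr //; lra.
  have : 0 <= `|x - x0| by exact: normr_ge0.
  nra.
have B3 : `|(u - u0) * x| <= eps / 3.
  rewrite normrM.
  have Hxm : `|x| < M.
    rewrite /M; have := ler_normD (x - x0) x0; rewrite subrK; lra.
  have : `|u - u0| * (3 * M) < eps.
    by rewrite -ltr_pdivlMr ?mulr_gt0 //; apply: lt_le_trans Hu _; exact: minle_r.
  have : 0 <= `|u - u0| by exact: normr_ge0.
  have : 0 <= `|x| by exact: normr_ge0.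
  nra.
have := ler_normD (A u0 - A u + (et - u0) * (x0 - x)) ((u - u0) * x).
have := ler_normD (A u0 - A u) ((et - u0) * (x0 - x)).
lra.
Qed.
End KL.
Section Main.
Variables (R : realType) (t : tree) (Th : set R) (A : R -> R) (th : R).
Hypotheses (wf : wf_tree t) (HE : expfam Th A) (Hth : meanset Th A th).
Local Notation X := (meanset Th A).
Local Notation d := (kl Th A).

Lemma node_ind (P : seq nat -> tree -> Prop) :
  (forall p, subtree t p = Some Leaf -> P p Leaf) ->
  (forall p b cs, subtree t p = Some (Node b cs) ->
     (forall i, (i < size cs)%N -> P (rcons p i) (nth Leaf cs i)) -> P p (Node b cs)) ->
  forall s p, subtree t p = Some s -> P p s.
Proof.
move=> HL HN; elim/tree_ind' => [|b cs IH] p Hp; first exact: HL.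
by apply: HN => // i Hi; apply: IH => //; rewrite (subtree_rcons _ Hp) Hi.
Qed.

Lemma leaf_mem p : subtree t p = Some Leaf -> p \in leaves t.
Proof. by move=> H; have := @subtree_leaves t p Leaf [::] H; rewrite cats0; apply; rewrite inE. Qed.

Lemma node_size p b cs : subtree t p = Some (Node b cs) -> (0 < size cs)%N.
Proof. by move=> H; have /= /andP[Hn _] := wf_subtree wf H; rewrite lt0n. Qed.

Lemma sum_ext_leaves (P : pred (seq nat)) (F G : seq nat -> R) :
  (forall l, l \in leaves t -> P l -> F l = G l) ->
  \sum_(l <- leaves t | P l) F l = \sum_(l <- leaves t | P l) G l.
Proof. by move=> H; rewrite big_seq_cond [RHS]big_seq_cond; apply: eq_bigr => l /andP[? ?]; apply: H. Qed.

Lemma sum_restrict (p c : seq nat) (F : seq nat -> R) : (forall l, prefix c l -> prefix p l) ->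
  \sum_(l <- leaves t | prefix p l) (if prefix c l then F l else 0) =
  \sum_(l <- leaves t | prefix c l) F l.
Proof. by move=> H; rewrite -big_mkcondr; apply: eq_bigl => l; apply/andb_idl/H. Qed.

Lemma sum_ge0_leaves (P : pred (seq nat)) (F : seq nat -> R) :
  (forall l, l \in leaves t -> P l -> 0 <= F l) -> 0 <= \sum_(l <- leaves t | P l) F l.
Proof. by move=> H; rewrite big_seq_cond; apply: sumr_ge0 => l /andP[? ?]; apply: H. Qed.

Lemma sum_pos n (f : 'I_n -> R) : (0 < n)%N -> (forall i, 0 < f i) -> 0 < \sum_(i < n) f i.
Proof.
move=> Hn Hf; apply: (lt_le_trans (Hf (Ordinal Hn))).
rewrite (bigD1 (Ordinal Hn)) //= lerDl; apply: sumr_ge0 => i _; exact/ltW.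
Qed.

Lemma sum_ge_term n (f : 'I_n -> R) k : (forall i, 0 <= f i) -> f k <= \sum_(i < n) f i.
Proof. by move=> Hf; rewrite (bigD1 k) //= lerDl; apply: sumr_ge0. Qed.

Lemma sum_lt n (f g : 'I_n -> R) : (0 < n)%N -> (forall i, f i < g i) -> \sum_(i < n) f i < \sum_(i < n) g i.
Proof.
move=> Hn H; rewrite (bigD1 (Ordinal Hn)) // [X in _ < X](bigD1 (Ordinal Hn)) //=.
apply: ltr_leD; first exact: H.
by apply: ler_sum => i _; apply/ltW.
Qed.

Section Nu.
Variables (nu : seq nat -> R) (D : seq nat -> R) (W : seq nat -> seq nat -> R).
Hypotheses (Hnu : forall l, l \in leaves t -> X (nu l)) (HR : rec_weights t d th nu D W).
Local Notation a := (win t th nu).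

Lemma rw_leaf p : subtree t p = Some Leaf ->
  D p = (if (a && (th <= nu p)) || (~~ a && (nu p < th)) then d (nu p) th else 0) /\
  (forall l, l \in leaves t -> W p l = (l == p)%:R).
Proof. by move=> H; have := HR p; rewrite H. Qed.

Definition Ssum (p : seq nat) n := \sum_(i < n) (D (rcons p i))^-1.

Lemma rw_node p b cs : subtree t p = Some (Node b cs) ->
  (if b == a then
     [/\ (exists2 i, (i < size cs)%N & D (rcons p i) = D p),
         (forall i, (i < size cs)%N -> D (rcons p i) <= D p) &
         (0 < D p -> exists2 i, ((i < size cs)%N /\ D (rcons p i) = D p) &
             forall l, l \in leaves t -> W p l = if prefix (rcons p i) l then W (rcons p i) l else 0)]
   else if [forall i : 'I_(size cs), 0 < D (rcons p i)] then
     D p = (Ssum p (size cs))^-1 /\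
     (forall l, l \in leaves t -> W p l = \sum_(i < size cs)
         (if prefix (rcons p i) l then W (rcons p i) l / D (rcons p i) / Ssum p (size cs) else 0))
   else D p = 0) /\
  (D p = 0 -> probvec_on t p (W p)).
Proof. by move=> H; have := HR p; rewrite H. Qed.

Lemma D_ge0 : forall s p, subtree t p = Some s -> 0 <= D p.
Proof.
apply: node_ind.
  move=> p H; have [-> _] := rw_leaf H; case: ifP => // _.
  by apply: kl_ge0 => //; exact: Hnu (leaf_mem H).
move=> p b cs H IH; have [Hn _] := rw_node H.
case: (b == a) Hn => [[[i Hi <-] _ _]|]; first exact: IH.
case: ifP => [/forallP Hpos [-> _]|_ ->//].
rewrite invr_ge0; apply: sumr_ge0 => i _; rewrite invr_ge0; exact/ltW/Hpos.
Qed.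

Lemma D_pos : forall s p, subtree t p = Some s -> sopp a th (val_at t p nu) -> 0 < D p.
Proof.
apply: node_ind.
  move=> p H; rewrite val_at_leaf // => Hs; have [-> _] := rw_leaf H.
  have Hx := Hnu (leaf_mem H).
  move: Hs; rewrite /sopp; case: (win t th nu) => Hs /=.
    by rewrite (ltW Hs) /=; apply: kl_gt0 => //; rewrite gt_eqF.
  by rewrite Hs /=; apply: kl_gt0 => //; rewrite lt_eqF.
move=> p b cs H IH /(sopp_node _ _ _ wf H) Hs; have [Hn _] := rw_node H.
case: (b == a) Hs Hn => [[i Hi Hsi] [_ Hle _]|Hall].
  by apply: lt_le_trans (IH i Hi Hsi) (Hle i Hi).
have Hpos : [forall i : 'I_(size cs), 0 < D (rcons p i)].
  by apply/forallP => i; apply: IH => //; apply: Hall.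
rewrite Hpos => -[-> _]; rewrite invr_gt0; apply: sum_pos; first exact: node_size H.
by move=> i; rewrite invr_gt0; apply: (forallP Hpos).
Qed.

Lemma root_sopp : gval t nu != th -> sopp a th (val_at t [::] nu).
Proof.
rewrite val_at_root /sopp /win => Hne; case: ifP => H; last by rewrite ltNge H.
by rewrite lt_def Hne.
Qed.

Definition cost p (u lam : seq nat -> R) := \sum_(l <- leaves t | prefix p l) u l * d (nu l) (lam l).
Definition mass p (u : seq nat -> R) := \sum_(l <- leaves t | prefix p l) u l.
Definition good p (u : seq nat -> R) :=
  [/\ forall l, l \in leaves t -> 0 <= u l,
      forall l, l \in leaves t -> ~~ prefix p l -> u l = 0,
      mass p u = 1 &
      forall lam, (forall l, l \in leaves t -> X (lam l)) -> flip a th (val_at t p lam) ->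
        D p <= cost p u lam].

Lemma cost_ge0 p u lam : (forall l, l \in leaves t -> 0 <= u l) ->
  (forall l, l \in leaves t -> X (lam l)) -> 0 <= cost p u lam.
Proof. by move=> Hu Hl; apply: sum_ge0_leaves => l Hm _; apply: mulr_ge0; [exact: Hu | apply: (kl_ge0 HE); [exact: Hnu | exact: Hl]]. Qed.

Lemma mass_ge0 p u : (forall l, l \in leaves t -> 0 <= u l) -> 0 <= mass p u.
Proof. by move=> Hu; apply: sum_ge0_leaves => l Hm _; exact: Hu. Qed.

Lemma good_ext p u v : (forall l, l \in leaves t -> u l = v l) -> good p u -> good p v.
Proof.
move=> E [H1 H2 H3 H4]; split.
- by move=> l Hl; rewrite -E //; apply: H1.
- by move=> l Hl Hp; rewrite -E //; apply: H2.
- by rewrite /mass -(sum_ext_leaves (F := u)) //; move=> l Hl _; rewrite E.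
- move=> lam Hlam Hf; rewrite /cost -(sum_ext_leaves (F := fun l => u l * d (nu l) (lam l))).
    exact: H4.
  by move=> l Hl _; rewrite E.
Qed.

Lemma good_leaf p : subtree t p = Some Leaf -> good p (W p).
Proof.
move=> H; have [HD HW] := rw_leaf H; have Hp := leaf_mem H.
split.
- by move=> l Hl; rewrite HW // ler0n.
- move=> l Hl Hpl; rewrite HW //; case: eqP => // E; by move: Hpl; rewrite E prefix_refl.
- by rewrite /mass sum_leaf // HW // eqxx.
move=> lam Hlam; rewrite val_at_leaf // /cost sum_leaf // HW // eqxx mul1r HD.
have Hx := Hnu Hp; have Hl := Hlam p Hp.
rewrite /flip; case: (win t th nu) => /= Hf.
  case: ifP => [Hle|_]; last exact: kl_ge0.
  by rewrite orbF in Hle; apply: kl_win.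
case: ifP => [Hlt|_]; last exact: kl_ge0.
by apply: kl_lose.
Qed.

Lemma cost_restrict p c u lam : (forall l, prefix c l -> prefix p l) ->
  cost p (fun l => if prefix c l then u l else 0) lam = cost c u lam.
Proof.
move=> Hc; rewrite /cost -(@sum_restrict p c (fun l => u l * d (nu l) (lam l))) //.
apply: eq_bigr => l _.
by case: ifP; rewrite ?mul0r.
Qed.

Lemma good_P p b cs i u : subtree t p = Some (Node b cs) -> b == a -> (i < size cs)%N ->
  D (rcons p i) = D p -> good (rcons p i) u ->
  good p (fun l => if prefix (rcons p i) l then u l else 0).
Proof.
move=> H Hb Hi HD [H1 H2 H3 H4]; have Hpre := @prefix_rconsW p i.
split.
- by move=> l Hl; case: ifP => // _; apply: H1.
- move=> l Hl Hpl; case: ifP => // Hc; by move: Hpl; rewrite (Hpre _ Hc).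
- by rewrite /mass sum_restrict.
move=> lam Hlam /(flip_node _ _ _ wf H); rewrite Hb => Hall.
by rewrite cost_restrict // -HD; apply: H4 => //; apply: Hall.
Qed.

Lemma good_Q p b cs (us : nat -> seq nat -> R) : subtree t p = Some (Node b cs) -> b != a ->
  (forall j : 'I_(size cs), 0 < D (rcons p j)) -> D p = (Ssum p (size cs))^-1 ->
  (forall j : 'I_(size cs), good (rcons p j) (us j)) ->
  good p (fun l => \sum_(j < size cs)
     (if prefix (rcons p j) l then us j l / D (rcons p j) / Ssum p (size cs) else 0)).
Proof.
move=> H Hb Hpos HD Hg; set S := Ssum p (size cs).
have S0 : 0 < S by apply: sum_pos; [exact: node_size H | by move=> j; rewrite invr_gt0].
have Hpre := @prefix_rconsW p.
split.
- move=> l Hl; apply: sumr_ge0 => j _; case: ifP => // _.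
  apply: divr_ge0; last exact: ltW.
  by apply: divr_ge0; [case: (Hg j) => + _ _ _; apply | exact/ltW].
- move=> l Hl Hpl; apply: big1 => j _; case: ifP => // Hc.
  by move: Hpl; rewrite (Hpre _ _ Hc).
- rewrite /mass exchange_big /=.
  rewrite (eq_bigr (fun j : 'I_(size cs) => (D (rcons p j))^-1 / S)) -?mulr_suml ?mulfV ?gt_eqF //.
  move=> j _; rewrite sum_restrict; last exact: Hpre.
  rewrite -!mulr_suml; case: (Hg j) => _ _ Hm _; rewrite /mass in Hm; by rewrite Hm mul1r.
move=> lam Hlam /(flip_node _ _ _ wf H); rewrite (negbTE Hb) => -[k Hk Hfk].
have Hck : forall j : 'I_(size cs), 0 <= cost (rcons p j) (us j) lam.
  by move=> j; apply: cost_ge0 => //; case: (Hg j).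
rewrite /cost (eq_bigr (fun l => \sum_(j < size cs)
   (if prefix (rcons p j) l then us j l / D (rcons p j) / S * d (nu l) (lam l) else 0))); last first.
  by move=> l _; rewrite mulr_suml; apply: eq_bigr => j _; case: ifP; rewrite ?mul0r.
rewrite exchange_big /=.
rewrite (eq_bigr (fun j : 'I_(size cs) => cost (rcons p j) (us j) lam / D (rcons p j) / S)); last first.
  move=> j _; rewrite sum_restrict; last exact: Hpre.
  by rewrite /cost !mulr_suml; apply: eq_bigr => l _; ring.
have Hk' := Hpos (Ordinal Hk).
apply: le_trans (sum_ge_term (Ordinal Hk) _); last first.
  by move=> j; apply: divr_ge0; [apply: divr_ge0 => //; exact/ltW | exact/ltW].
rewrite HD /= -/S -[X in X <= _]mul1r; apply: ler_wpM2r; first by rewrite invr_ge0 ltW.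
rewrite ler_pdivlMr // mul1r.
by case: (Hg (Ordinal Hk)) => _ _ _; apply.
Qed.

Lemma good_W : forall s p, subtree t p = Some s -> good p (W p).
Proof.
apply: node_ind; first exact: good_leaf.
move=> p b cs H IH; have [Hn Hz] := rw_node H.
have HD0 := D_ge0 H.
case: (eqVneq (D p) 0) => [E|Hne].
  have [P1 [P2 P3]] := Hz E; split => //.
  - by move=> l Hl; case Hp: (prefix p l); [exact: P1 | rewrite P2 ?Hp].
  - move=> lam Hlam _; rewrite E; apply: cost_ge0 => // l Hl.
    by case Hp: (prefix p l); [exact: P1 | rewrite P2 ?Hp].
have Dp : 0 < D p by rewrite lt_def Hne HD0.
case Hb: (b == a) Hn => Hn.
  case: Hn => _ _ /(_ Dp) [i [Hi HDi] HW].
  apply: good_ext (good_P H Hb Hi HDi (IH i Hi)).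
  by move=> l Hl; rewrite HW.
case: ifP Hn => [/forallP Hpos [HDp HW]|_ E]; last by move: Hne; rewrite E eqxx.
apply: good_ext (good_Q (us := W \o rcons p) H (negbT Hb) Hpos HDp _).
  by move=> l Hl; rewrite HW.
by move=> j; apply: IH.
Qed.

Lemma cost_leaf p w lam : subtree t p = Some Leaf -> cost p w lam = w p * d (nu p) (lam p).
Proof. by move=> H; rewrite /cost sum_leaf. Qed.
Lemma mass_leaf p w : subtree t p = Some Leaf -> mass p w = w p.
Proof. by move=> H; rewrite /mass sum_leaf. Qed.

Lemma nth_sub p b cs i : subtree t p = Some (Node b cs) -> (i < size cs)%N ->
  subtree t (rcons p i) = Some (nth Leaf cs i).
Proof. by move=> H Hi; rewrite (subtree_rcons _ H) Hi. Qed.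

Lemma upper_step p b cs k w eps : subtree t p = Some (Node b cs) -> b != a -> (k < size cs)%N ->
  mass (rcons p k) w * D (rcons p k) <= mass p w * D p ->
  (exists lam, [/\ forall l, l \in leaves t -> X (lam l), flip a th (val_at t (rcons p k) lam),
     forall l, ~~ prefix (rcons p k) l -> lam l = nu l &
     cost (rcons p k) w lam <= mass (rcons p k) w * D (rcons p k) + eps]) ->
  exists lam, [/\ forall l, l \in leaves t -> X (lam l), flip a th (val_at t p lam),
     forall l, ~~ prefix p l -> lam l = nu l &
     cost p w lam <= mass p w * D p + eps].
Proof.
move=> H Hb Hk Hm [lam [H1 H2 H3 H4]]; exists lam; split => //.
- by apply/(flip_node _ _ _ wf H); rewrite (negbTE Hb); exists k.
- by move=> l Hl; apply: H3; apply: contra Hl; apply: prefix_rconsW.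
have E : cost p w lam = cost (rcons p k) w lam.
  rewrite -(@cost_restrict p (rcons p k) w lam); last exact: prefix_rconsW.
  rewrite /cost; apply: eq_bigr => l _; case: ifP => // Hc.
  by rewrite H3 ?Hc // kl_xx !mulr0.
by rewrite E; apply: le_trans H4 _; rewrite lerD2r.
Qed.

Lemma upper : forall s p, subtree t p = Some s ->
  forall w, (forall l, l \in leaves t -> 0 <= w l) -> forall eps, 0 < eps ->
  exists lam, [/\ forall l, l \in leaves t -> X (lam l), flip a th (val_at t p lam),
     forall l, ~~ prefix p l -> lam l = nu l &
     cost p w lam <= mass p w * D p + eps].
Proof.
apply: node_ind.
  move=> p H w Hw eps He; have [HD _] := rw_leaf H; have Hp := leaf_mem H.
  have Hx := Hnu Hp; have wp0 := Hw p Hp.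
  rewrite mass_leaf //.
  pose lamz z := fun l => if l == p then z else nu l.
  have Hlamz : forall z, X z -> forall l, l \in leaves t -> X (lamz z l).
    by move=> z Hz l Hl; rewrite /lamz; case: ifP => // _; apply: Hnu.
  have Hout : forall z l, ~~ prefix p l -> lamz z l = nu l.
    move=> z l Hl; rewrite /lamz; case: eqP => // E; by move: Hl; rewrite E prefix_refl.
  have Hnu0 : w p * d (nu p) (nu p) <= w p * D p + eps.
    rewrite kl_xx mulr0; apply: addr_ge0; [apply: mulr_ge0 => //; exact: D_ge0 H | exact: ltW].
  have Hnus : forall l, l \in leaves t -> X (nu l) by move=> l Hl; exact: Hnu.
  rewrite /flip; move: HD; case: (win t th nu) => /= HD.
    case: (leP th (nu p)) HD => Hle HD; last first.
      by exists nu; split => //; rewrite ?val_at_leaf ?cost_leaf.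
    have He' : 0 < eps / (w p + 1) by apply: divr_gt0 => //; lra.
    have [z [Hz Hzt Hzd]] := kl_below HE Hx Hth He'.
    exists (lamz z); split => //; first exact: Hlamz.
    - by rewrite val_at_leaf // /lamz eqxx.
    - exact: Hout.
    - rewrite cost_leaf // /lamz eqxx HD orbF.
      have E : w p * (eps / (w p + 1)) + eps / (w p + 1) = eps.
        by field; apply/lt0r_neq0; lra.
      have : w p * d (nu p) z <= w p * (d (nu p) th + eps / (w p + 1)) by apply: ler_wpM2l.
      lra.
  case: (ltP (nu p) th) HD => Hlt HD; last first.
    by exists nu; split => //; rewrite ?val_at_leaf ?cost_leaf.
  exists (lamz th); split => //; first exact: Hlamz.
  - by rewrite val_at_leaf // /lamz eqxx.
  - exact: Hout.
  - by rewrite cost_leaf // /lamz eqxx HD lerDl ltW.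
move=> p b cs H IH w Hw eps He; have [Hn _] := rw_node H.
have Hn0 := node_size H.
case Hb: (b == a) Hn => Hn.
  case: Hn => _ Hle _.
  set e' := eps / (size cs)%:R.
  have He' : 0 < e' by apply: divr_gt0 => //; rewrite ltr0n.
  have : forall i : nat, exists lam, (i < size cs)%N ->
     [/\ forall l, l \in leaves t -> X (lam l), flip a th (val_at t (rcons p i) lam),
     forall l, ~~ prefix (rcons p i) l -> lam l = nu l &
     cost (rcons p i) w lam <= mass (rcons p i) w * D (rcons p i) + e'].
    move=> i; case: (ltnP i (size cs)) => Hi; last by exists nu.
    by have [lam Hl] := IH i Hi w Hw e' He'; exists lam.
  case/choice => Lam HL.
  pose lam l := if prefix p l && (size p < size l)%N then Lam (nth 0%N l (size p)) l else nu l.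
  have Key : forall i l, (i < size cs)%N -> prefix (rcons p i) l -> lam l = Lam i l.
    move=> i l Hi Hc; have [Hn1 Hn2] := prefix_rcons_nth Hc.
    by rewrite /lam (prefix_rconsW Hc) Hn2 Hn1.
  exists lam; split.
  - move=> l Hl; rewrite /lam; case: ifP => [/andP[Hp _]|_]; last exact: Hnu.
    have [i Hi Hc] := leaf_in_child H Hl Hp.
    by have [Hn1 _] := prefix_rcons_nth Hc; rewrite Hn1; case: (HL i Hi) => + _ _ _; apply.
  - apply/(flip_node _ _ _ wf H); rewrite Hb => i Hi.
    rewrite (val_at_ext (l2 := Lam i)); first by case: (HL i Hi).
    by move=> l _ Hc; apply: Key.
  - by move=> l Hl; rewrite /lam (negbTE Hl).
  rewrite /cost /mass !(sum_node _ H).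
  rewrite -/(cost _ _ _) (eq_bigr (fun i : 'I_(size cs) => cost (rcons p i) w (Lam i))); last first.
    by move=> i _; apply: eq_bigr => l Hc; rewrite (Key i).
  have HL4 : forall i : 'I_(size cs), true ->
      cost (rcons p i) w (Lam i) <= mass (rcons p i) w * D (rcons p i) + e'.
    by move=> i _; case: (HL i (ltn_ord i)).
  apply: le_trans; first by apply: ler_sum => i _; exact: (HL4 i isT).
  rewrite big_split /= sumr_const card_ord -mulr_natr divfK ?pnatr_eq0 -?lt0n // mulr_suml lerD2r.
  apply: ler_sum => i _; apply: ler_wpM2l; first by apply: mass_ge0.
  exact: Hle.
case: ifP Hn => [/forallP Hpos [HDp _]|/negbT/forallPn [k Hk] HDp].
  set S := Ssum p (size cs).
  have S0 : 0 < S by apply: sum_pos => // j; rewrite invr_gt0.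
  have Hmass : mass p w = \sum_(i < size cs) mass (rcons p i) w by rewrite /mass (sum_node _ H).
  have [k Hk Hmk] : exists2 k, (k < size cs)%N & mass (rcons p k) w * D (rcons p k) <= mass p w * D p.
    case: (pselect (exists2 k, (k < size cs)%N & mass (rcons p k) w * D (rcons p k) <= mass p w * D p)) => // Hno.
    have Hall : forall k : 'I_(size cs), mass p w * D p < mass (rcons p k) w * D (rcons p k).
      by move=> k; rewrite ltNge; apply/negP => Hk; apply: Hno; exists k.
    have E1 : \sum_(k < size cs) (mass p w * D p) / D (rcons p k) = mass p w.
      by rewrite -mulr_sumr HDp -/S divfK // gt_eqF.
    have E2 : \sum_(k < size cs) mass (rcons p k) w * D (rcons p k) / D (rcons p k) = mass p w.
      rewrite Hmass; apply: eq_bigr => k _; rewrite mulfK // gt_eqF //; exact: (Hpos k).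
    have : \sum_(k < size cs) (mass p w * D p) / D (rcons p k) <
           \sum_(k < size cs) mass (rcons p k) w * D (rcons p k) / D (rcons p k).
      apply: sum_lt => // k; rewrite ltr_pM2r ?invr_gt0 //; exact: (Hpos k).
    by rewrite E1 E2 ltxx.
  apply: (upper_step H (negbT Hb) Hk Hmk).
  exact: IH.
have Hk' := ltn_ord k.
apply: (upper_step H (negbT Hb) Hk').
  have := D_ge0 (nth_sub H Hk'); rewrite le_eqVlt (negbTE Hk) orbF => /eqP <-.
  by rewrite mulr0 HDp mulr0.
exact: IH.
Qed.

Lemma flip_root lam : flip a th (val_at t [::] lam) = (win t th lam != a).
Proof.
by rewrite val_at_root /flip /win; case: (th <= gval t nu); case: leP.
Qed.

Lemma cost_root u lam : cost [::] u lam = \sum_(l <- leaves t) u l * d (nu l) (lam l).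
Proof. by rewrite /cost; apply: eq_bigl => l; rewrite prefix0s. Qed.

Lemma mass_root u : mass [::] u = \sum_(l <- leaves t) u l.
Proof. by rewrite /mass; apply: eq_bigl => l; rewrite prefix0s. Qed.

Lemma obj_le w : simplex t w -> maxmin_obj t X d th nu w <= D [::].
Proof.
case=> Hw Hs; rewrite /maxmin_obj.
set S := [set _ | _ in _].
have HS : has_lbound S.
  exists 0 => x [lam [Hl _] <-]; rewrite -cost_root; exact: cost_ge0.
apply/ler_addgt0Pr => e He.
have [lam [H1 H2 H3 H4]] := upper (subtree_nil t) Hw He.
have HlS : S (cost [::] w lam).
  by exists lam; [split => //; rewrite -flip_root | rewrite cost_root].
apply: le_trans (ge_inf HS HlS) _.
by rewrite mass_root Hs mul1r in H4.
Qed.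

Lemma obj_ge u : good [::] u -> D [::] <= maxmin_obj t X d th nu u.
Proof.
case=> Hu Hsup Hm Hlow; rewrite /maxmin_obj.
apply: lb_le_inf.
  have [lam [H1 H2 H3 H4]] := upper (subtree_nil t) Hu ltr01.
  by exists (cost [::] u lam); exists lam; [split => //; rewrite -flip_root | rewrite cost_root].
move=> x [lam [Hl Hw] <-]; rewrite -cost_root; apply: Hlow => //.
by rewrite flip_root.
Qed.

Lemma good_max u : good [::] u -> is_maximizer t X d th nu u.
Proof.
move=> Hg; split.
  case: Hg => Hu _ Hm _; split => //; by rewrite -mass_root.
move=> w' Hw'; apply: le_trans (obj_le Hw') (obj_ge Hg).
Qed.

Inductive relevant : seq nat -> Prop :=
| rel0 : 0 < D [::] -> relevant [::]
| relS q i b cs : relevant q -> subtree t q = Some (Node b cs) -> (i < size cs)%N ->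
    (b == a -> D (rcons q i) = D q) -> relevant (rcons q i).

Lemma relevant_node q : relevant q -> exists s, subtree t q = Some s.
Proof.
case=> [_|q' i b cs _ H Hi _]; first by exists t; rewrite subtree_nil.
by exists (nth Leaf cs i); exact: nth_sub H Hi.
Qed.

Lemma Q_pos p b cs : subtree t p = Some (Node b cs) -> b != a -> 0 < D p ->
  (forall j : 'I_(size cs), 0 < D (rcons p j)) /\ D p = (Ssum p (size cs))^-1 /\
  (forall l, l \in leaves t -> W p l = \sum_(i < size cs)
         (if prefix (rcons p i) l then W (rcons p i) l / D (rcons p i) / Ssum p (size cs) else 0)).
Proof.
move=> H Hb Dp; have [Hn _] := rw_node H; rewrite (negbTE Hb) in Hn.
case: ifP Hn => [/forallP Hpos [? ?]|_ E]; last by move: Dp; rewrite E ltxx.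
by split.
Qed.

Lemma relevant_pos q : relevant q -> 0 < D q.
Proof.
elim=> [//|q' i b cs Hr IH H Hi Hb].
case Eb: (b == a); first by rewrite Hb.
have [Hpos _] := Q_pos H (negbT Eb) IH.
exact: (Hpos (Ordinal Hi)).
Qed.

Lemma up p : relevant p -> exists2 K, 0 < K & exists g : seq nat -> R,
  forall u, good p u -> good [::] (fun l => if prefix p l then K * u l else g l).
Proof.
elim=> [_|q i b cs Hr [K K0 [g IH]] H Hi Hb].
  exists 1 => //; exists (fun _ => 0) => u Hu; apply: good_ext Hu => l _.
  by rewrite prefix0s mul1r.
have Dq := relevant_pos Hr.
case Eb: (b == a).
  exists K => //; exists (fun l => if prefix q l then 0 else g l) => u Hu.
  have := IH _ (good_P H Eb Hi (Hb Eb) Hu); apply: good_ext => l _.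
  case Hc: (prefix (rcons q i) l); first by rewrite (prefix_rconsW Hc).
  by case: (prefix q l); rewrite ?mulr0.
have [Hpos [HDq HWq]] := Q_pos H (negbT Eb) Dq.
set S := Ssum q (size cs).
have S0 : 0 < S by apply: sum_pos; [exact: node_size H | by move=> j; rewrite invr_gt0].
have Di := Hpos (Ordinal Hi).
exists (K / D (rcons q i) / S); first by rewrite !divr_gt0.
exists (fun l => if prefix q l then K * W q l else g l) => u Hu.
pose us j := if j == i then u else W (rcons q j).
have Hus : forall j : 'I_(size cs), good (rcons q j) (us j).
  move=> j; rewrite /us; case: eqP => [->//|_].
  exact: good_W (nth_sub H (ltn_ord j)).
have := IH _ (good_Q (us := us) H (negbT Eb) Hpos HDq Hus); apply: good_ext => l Hl.
case Hc: (prefix (rcons q i) l).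
  rewrite (prefix_rconsW Hc) (bigD1 (Ordinal Hi)) //= Hc /us eqxx big1 ?addr0.
    by rewrite -/S; field; rewrite !gt_eqF.
  move=> j Hj; case: ifP => // Hcj; exfalso; move: Hj; apply/negP; rewrite negbK.
  by apply/eqP/val_inj => /=; apply: prefix_rcons_inj Hcj Hc.
case: ifP => // Hq; rewrite HWq //; congr (_ * _); apply: eq_bigr => j _.
case: ifP => // Hcj; rewrite /us; case: eqP => // Ej.
by move: Hc; rewrite -Ej Hcj.
Qed.

Lemma exists_pos_leaf p u : good p u -> exists2 l, l \in leaves t & prefix p l && (u l != 0).
Proof.
case=> _ _ Hm _; apply: contrapT => Hno.
move: Hm; rewrite /mass big1_seq => [/eqP|]; first by rewrite eq_sym oner_eq0.
move=> l /andP[Hp Hl]; apply/eqP; rewrite -[_ == _]negbK; apply/negP => Hne.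
by apply: Hno; exists l => //; rewrite Hp.
Qed.

Hypothesis Huniq : forall w1 w2, is_maximizer t X d th nu w1 -> is_maximizer t X d th nu w2 ->
  forall l, l \in leaves t -> w1 l = w2 l.

Lemma no_tie p b cs i j : relevant p -> subtree t p = Some (Node b cs) -> b == a ->
  (i < size cs)%N -> (j < size cs)%N -> D (rcons p i) = D p -> D (rcons p j) = D p -> i = j.
Proof.
move=> Hr H Hb Hi Hj Ei Ej.
case: (eqVneq i j) => // Hne; exfalso.
have [K K0 [g Hup]] := up Hr.
have Gi := Hup _ (good_P H Hb Hi Ei (good_W (nth_sub H Hi))).
have Gj := Hup _ (good_P H Hb Hj Ej (good_W (nth_sub H Hj))).
have [l Hl /andP[Hcl Hwl]] := exists_pos_leaf (good_W (nth_sub H Hi)).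
have := Huniq (good_max Gi) (good_max Gj) Hl.
rewrite (prefix_rconsW Hcl) Hcl.
have -> : prefix (rcons p j) l = false.
  by apply/negP => Hcj; move: Hne; rewrite (prefix_rcons_inj Hcl Hcj) eqxx.
by rewrite mulr0 => /eqP; rewrite mulf_eq0 (negbTE Hwl) orbF gt_eqF.
Qed.
End Nu.
End Main.
Section Cont.
Variables (R : realType) (t : tree) (Th : set R) (A : R -> R) (th : R) (mu : seq nat -> R).
Hypotheses (wf : wf_tree t) (HE : expfam Th A) (Hth : meanset Th A th)
  (Hmu : forall l, l \in leaves t -> meanset Th A (mu l)).
Local Notation X := (meanset Th A).
Local Notation d := (kl Th A).

Definition TT := ((seq nat -> R) * (seq nat -> R) * (seq nat -> seq nat -> R))%type.
Definition close (xi : R) (m : seq nat -> R) := forall l, l \in leaves t -> X (m l) /\ mu l - xi <= m l <= mu l + xi.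
Definition nearF : set_system TT := fun Q => exists2 xi, 0 < xi &
  forall z : TT, close xi z.1.1 -> rec_weights t d th z.1.1 z.1.2 z.2 -> Q z.

Lemma close_le xi1 xi2 m : xi1 <= xi2 -> close xi1 m -> close xi2 m.
Proof.
move=> Hle H l Hl; have [Hx /andP[H1 H2]] := H l Hl; split => //.
by apply/andP; split; lra.
Qed.

Global Instance nearF_filter : Filter nearF.
Proof.
constructor.
- by exists 1.
- move=> P Q [x1 x10 H1] [x2 x20 H2]; exists (Num.min x1 x2); first by rewrite lt_min x10 x20.
  move=> z Hz HR; split; [apply: H1 | apply: H2] => //; apply: close_le Hz.
    exact: minle_l.
  exact: minle_r.
- by move=> P Q PQ [xi xi0 H]; exists xi => // z Hz HR; apply: PQ; apply: H.
Qed.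

Lemma nearP (P : TT -> Prop) : (\forall z \near nearF, P z) = nearF P.
Proof. by []. Qed.

Lemma near_X : nearF (fun z => forall l, l \in leaves t -> X (z.1.1 l)).
Proof. by exists 1 => // z Hz _ l Hl; case: (Hz l Hl). Qed.

Lemma near_rw : nearF (fun z => rec_weights t d th z.1.1 z.1.2 z.2).
Proof. by exists 1. Qed.

Lemma near_dist e : 0 < e -> nearF (fun z => forall l, l \in leaves t -> `|z.1.1 l - mu l| <= e).
Proof.
move=> He; exists e => // z Hz _ l Hl; have [_ /andP[H1 H2]] := Hz l Hl.
by rewrite ler_norml; apply/andP; split; lra.
Qed.

Lemma near_win : gval t mu != th -> nearF (fun z => win t th z.1.1 = win t th mu).
Proof.
move=> Hne; set e := `|gval t mu - th| / 2.
have e0 : 0 < e by rewrite divr_gt0 // normr_gt0 subr_eq0.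
apply: filterS (near_dist e0) => z Hz.
have := gval_lip (l1 := z.1.1) (l2 := mu) (s := t) (ltW e0) Hz.
rewrite /win /e; move: Hne; rewrite -subr_eq0 => Hne.
rewrite ler_norml; case: (ltgtP (gval t mu) th) => H.
- rewrite ltr0_norm ?subr_lt0 // => /andP[H1 H2].
  have -> : (th <= gval t z.1.1) = false by rewrite leNgt; apply/negbF; lra.
  done.
- rewrite gtr0_norm ?subr_gt0 // => /andP[H1 H2].
  lra.
- by move: Hne; rewrite H subrr eqxx.
Qed.

Lemma near_forall_seq (I : eqType) (r : seq I) (P : I -> TT -> Prop) :
  (forall i, i \in r -> nearF (P i)) -> nearF (fun z => forall i, i \in r -> P i z).
Proof.
elim: r => [|i r IH] H; first by exists 1.
have Hi := H i (mem_head _ _).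
have Hr := IH (fun j Hj => H j (@mem_behead _ (i :: r) j Hj)).
apply: filterS (filterI Hi Hr) => z [Hz1 Hz2] j; rewrite inE => /orP[/eqP ->//|Hj].
exact: Hz2.
Qed.

Lemma near_forall_ord n (P : 'I_n -> TT -> Prop) :
  (forall i, nearF (P i)) -> nearF (fun z => forall i, P i z).
Proof.
move=> H; have := near_forall_seq (r := enum 'I_n) (P := P) (fun i _ => H i).
by apply: filterS => z Hz i; apply: Hz; rewrite mem_enum.
Qed.

Lemma convP (f : TT -> R) (x : R) : (forall e, 0 < e -> nearF (fun z => `|x - f z| < e)) -> f @ nearF --> x.
Proof. by move=> H; apply/cvgrPdist_lt => e He; rewrite nearP; apply: H. Qed.

Lemma convE (f : TT -> R) (x : R) : f @ nearF --> x -> forall e, 0 < e -> nearF (fun z => `|x - f z| < e).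
Proof. by move/cvgrPdist_lt => H e He; have := H e He; rewrite nearP. Qed.

Lemma conv_eq (f g : TT -> R) (x : R) : nearF (fun z => f z = g z) -> g @ nearF --> x -> f @ nearF --> x.
Proof.
move=> Heq Hg; apply: convP => e He; have := convE Hg He.
by move=> Hn; apply: filterS (filterI Heq Hn) => z [-> ?].
Qed.

Lemma conv_sum (I : Type) (r : seq I) (f : I -> TT -> R) (x : I -> R) :
  (forall i, f i @ nearF --> x i) ->
  (fun z => \sum_(i <- r) f i z) @ nearF --> \sum_(i <- r) x i.
Proof.
move=> H; elim: r => [|i r IH].
  rewrite big_nil; under eq_fun do rewrite big_nil; exact: cvg_cst.
rewrite big_cons; under eq_fun do rewrite big_cons; exact: cvgD.
Qed.


Variables (D0 : seq nat -> R) (W0 : seq nat -> seq nat -> R).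
Hypotheses (HR0 : rec_weights t d th mu D0 W0) (Hne : gval t mu != th).

Lemma cond_agree (m x0 : R) : x0 != th -> `|m - x0| <= `|x0 - th| / 2 ->
  (th <= m) = (th <= x0) /\ (m < th) = (x0 < th).
Proof.
move=> Hn; rewrite ler_norml => /andP[H1 H2].
case: (ltgtP x0 th) Hn H1 H2 => // H _.
  rewrite ltr0_norm ?subr_lt0 // => H1 H2; split; [apply/negbTE; rewrite -ltNge | ]; lra.
rewrite gtr0_norm ?subr_gt0 // => H1 H2; split; [|apply/negbTE; rewrite -leNgt]; lra.
Qed.

Lemma near_base : nearF (fun z => [/\ forall l, l \in leaves t -> X (z.1.1 l),
   rec_weights t d th z.1.1 z.1.2 z.2 & win t th z.1.1 = win t th mu]).
Proof.
apply: filterS (filterI near_X (filterI near_rw (near_win Hne))) => z [H1 [H2 H3]].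
by split.
Qed.

Lemma D_conv : forall s p, subtree t p = Some s -> (fun z : TT => z.1.2 p) @ nearF --> D0 p.
Proof.
apply: node_ind.
  move=> p H; apply: convP => e He.
  have [HD0 _] := rw_leaf HR0 H; have Hp := leaf_mem H; have Hx0 := Hmu Hp.
  have [del del0 Hdel] := kl_cont HE Hth Hx0 He.
  case: (eqVneq (mu p) th) => [Eth|Hn].
    have HD00 : D0 p = 0 by rewrite HD0 Eth kl_xx; case: ifP.
    have del2 : 0 < del / 2 by apply: divr_gt0.
    apply: filterS (filterI near_base (near_dist del2)) => z [[HX Hrw Hw] Hd].
    have [HD _] := rw_leaf Hrw H; rewrite HD HD00 sub0r normrN.
    case: ifP => _; last by rewrite normr0.
    have := Hdel (z.1.1 p) (HX _ Hp); rewrite Eth kl_xx subr0 -Eth; apply.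
    by have := Hd p Hp; lra.
  have eta0 : 0 < Num.min (del / 2) (`|mu p - th| / 2).
    by rewrite lt_min !divr_gt0 // normr_gt0 subr_eq0.
  apply: filterS (filterI near_base (near_dist eta0)) => z [[HX Hrw Hw] Hd].
  have [HD _] := rw_leaf Hrw H; rewrite HD HD0 Hw.
  have Hdp := Hd p Hp.
  have [C1 C2] := cond_agree Hn (le_trans Hdp (minle_r _ _)).
  rewrite C1 C2; case: ifP => _; last by rewrite subrr normr0.
  rewrite distrC; apply: Hdel; first exact: HX.
  have := minle_l (del / 2) (`|mu p - th| / 2); lra.
move=> p b cs H IH.
have Hn0 := node_size wf H.
have [Hn _] := rw_node HR0 H.
case Hb: (b == win t th mu) Hn => Hn.
  case: Hn => [[i0 Hi0 Ei0] Hle0 _].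
  apply: convP => e He.
  have Hch : nearF (fun z => forall i : 'I_(size cs), `|D0 (rcons p i) - z.1.2 (rcons p i)| < e).
    by apply: near_forall_ord => i; apply: convE He; apply: IH.
  apply: filterS (filterI near_base Hch) => z [[HX Hrw Hw] Hc].
  have [Hnz _] := rw_node Hrw H; rewrite Hw Hb in Hnz.
  case: Hnz => [[i1 Hi1 Ei1] Hle1 _].
  have := Hc (Ordinal Hi0); have := Hc (Ordinal Hi1); rewrite /= ltr_norml ltr_norml.
  have := Hle0 _ Hi1; have := Hle1 _ Hi0.
  rewrite Ei0 Ei1 => ? ? /andP[? ?] /andP[? ?]; rewrite ltr_norml; apply/andP; split; lra.
case: ifP Hn => [/forallP Hpos [HD0 _]|/negbT/forallPn [k Hk] HD0].
  set S := Ssum D0 p (size cs).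
  have S0 : 0 < S by apply: sum_pos => // j; rewrite invr_gt0.
  have Hpz : nearF (fun z => forall i : 'I_(size cs), 0 < z.1.2 (rcons p i)).
    apply: near_forall_ord => i; have Hi := Hpos i.
    apply: filterS (convE (IH i (ltn_ord i)) Hi) => z; rewrite ltr_norml => /andP[? ?]; lra.
  apply: (@conv_eq _ (fun z => (\sum_(i < size cs) (z.1.2 (rcons p i))^-1)^-1)).
    apply: filterS (filterI near_base Hpz) => z [[HX Hrw Hw] Hc].
    have [Hnz _] := rw_node Hrw H; rewrite Hw Hb in Hnz.
    have Hf : [forall i : 'I_(size cs), 0 < z.1.2 (rcons p i)] by apply/forallP.
    by rewrite Hf in Hnz; case: Hnz => ->.
  rewrite HD0; apply: cvgV; first by rewrite gt_eqF.
  apply: conv_sum => i; apply: cvgV; first by rewrite gt_eqF.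
  exact: IH.
have Hk' := ltn_ord k.
have Dk0 : D0 (rcons p k) = 0.
  by have := D_ge0 HE Hth Hmu HR0 (nth_sub H Hk'); rewrite le_eqVlt (negbTE Hk) orbF => /eqP <-.
apply: convP => e He.
apply: filterS (filterI near_base (convE (IH k Hk') He)) => z [[HX Hrw Hw] Hc].
rewrite Dk0 sub0r normrN in Hc; rewrite HD0 sub0r normrN.
have Hz0 := D_ge0 HE Hth HX Hrw H.
have Hzk := D_ge0 HE Hth HX Hrw (nth_sub H Hk').
rewrite ger0_norm // in Hc; rewrite ger0_norm //.
have [Hnz _] := rw_node Hrw H; rewrite Hw Hb in Hnz.
case: ifP Hnz => [/forallP Hf [-> _]|_ ->] //.
apply: le_lt_trans Hc; rewrite -[X in _ <= X]invrK lef_pV2 ?posrE ?invr_gt0 //.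
  by apply: (sum_ge_term k) => j; rewrite invr_ge0 ltW //; apply: Hf.
by apply: sum_pos => // j; rewrite invr_gt0; apply: Hf.
Qed.

Hypothesis Huniq : forall w1 w2, is_maximizer t X d th mu w1 -> is_maximizer t X d th mu w2 ->
  forall l, l \in leaves t -> w1 l = w2 l.

Lemma near_pos p (s : tree) : subtree t p = Some s -> 0 < D0 p -> nearF (fun z => 0 < z.1.2 p).
Proof.
move=> H Dp; apply: filterS (convE (D_conv H) Dp) => z; rewrite ltr_norml => /andP[? ?]; lra.
Qed.

Lemma W_conv : forall s p, subtree t p = Some s -> relevant t th mu D0 p ->
  forall l, l \in leaves t -> (fun z : TT => z.2 p l) @ nearF --> W0 p l.
Proof.
apply: node_ind.
  move=> p H Hr l Hl; have [_ HW0] := rw_leaf HR0 H.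
  apply: (@conv_eq _ (fun _ => W0 p l)); last exact: cvg_cst.
  apply: filterS near_base => z [HX Hrw Hw]; have [_ HW] := rw_leaf Hrw H.
  by rewrite HW // HW0.
move=> p b cs H IH Hr l Hl.
have Dp := relevant_pos HR0 Hr.
have [Hn _] := rw_node HR0 H.
case Hb: (b == win t th mu) Hn => Hn.
  case: Hn => [_ Hle0 /(_ Dp) [i [Hi Ei] HW0]].
  have Hri : relevant t th mu D0 (rcons p i) by apply: relS Hr H Hi _.
  have Hlt : forall j, (j < size cs)%N -> j != i -> D0 (rcons p j) < D0 p.
    move=> j Hj Hji; rewrite lt_def Hle0 // andbT; apply/negP => /eqP Ej.
    by move: Hji; rewrite (no_tie wf HE Hth Hmu HR0 Huniq Hr H Hb Hj Hi (esym Ej) Ei) eqxx.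
  have Hsep : nearF (fun z => forall j : 'I_(size cs), j != i :> nat -> z.1.2 (rcons p j) < z.1.2 p).
    apply: near_forall_ord => j; case: (eqVneq (j : nat) i) => [Ej|Ej].
      by exists 1 => // z _ _; rewrite Ej eqxx.
    have Hj := Hlt j (ltn_ord j) Ej.
    have del0 : 0 < (D0 p - D0 (rcons p j)) / 2 by apply: divr_gt0 => //; rewrite subr_gt0.
    apply: filterS (filterI (convE (D_conv H) del0) (convE (D_conv (nth_sub H (ltn_ord j))) del0)).
    move=> z [H1 H2] _; move: H1 H2; rewrite !ltr_norml => /andP[? ?] /andP[? ?]; lra.
  apply: (@conv_eq _ (fun z => if prefix (rcons p i) l then z.2 (rcons p i) l else 0)).
    apply: filterS (filterI near_base (filterI Hsep (near_pos H Dp))) => z [[HX Hrw Hw] [Hs Hz]].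
    have [Hnz _] := rw_node Hrw H; rewrite Hw Hb in Hnz.
    case: Hnz => [_ _ /(_ Hz) [i' [Hi' Ei'] HW]].
    have Eii : i' = i.
      apply/eqP; apply: contraT => Hne'; have := Hs (Ordinal Hi') Hne'.
      by rewrite /= Ei' ltxx.
    by rewrite HW // Eii.
  rewrite HW0 //; case: ifP => _; last exact: cvg_cst.
  exact: IH.
have [Hpos [HD0 HW0]] := Q_pos HR0 H (negbT Hb) Dp.
have Hpz : nearF (fun z => forall i : 'I_(size cs), 0 < z.1.2 (rcons p i)).
  by apply: near_forall_ord => i; apply: near_pos (nth_sub H (ltn_ord i)) (Hpos i).
apply: (@conv_eq _ (fun z => \sum_(i < size cs) (if prefix (rcons p i) l then
    z.2 (rcons p i) l / z.1.2 (rcons p i) / Ssum z.1.2 p (size cs) else 0))).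
  apply: filterS (filterI near_base Hpz) => z [[HX Hrw Hw] Hc].
  have [Hnz _] := rw_node Hrw H; rewrite Hw Hb in Hnz.
  have Hf : [forall i : 'I_(size cs), 0 < z.1.2 (rcons p i)] by apply/forallP.
  by rewrite Hf in Hnz; case: Hnz => _ ->.
rewrite HW0 //; apply: conv_sum => j; case: ifP => _; last exact: cvg_cst.
have Hj := ltn_ord j.
have S0 : 0 < Ssum D0 p (size cs).
  have Hn0 := node_size wf H.
  rewrite /Ssum; apply: sum_pos; first exact: Hn0.
  move=> i; rewrite invr_gt0; exact: Hpos.
apply: cvgM; first apply: cvgM.
- apply: IH => //; apply: relS Hr H Hj _; by rewrite Hb.
- by apply: cvgV; [rewrite gt_eqF | exact: D_conv (nth_sub H Hj)].
apply: cvgV; first by rewrite gt_eqF.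
apply: conv_sum => i; apply: cvgV; first by rewrite gt_eqF.
exact: D_conv (nth_sub H (ltn_ord i)).
Qed.

Lemma root_conv : forall l, l \in leaves t -> (fun z : TT => z.2 [::] l) @ nearF --> W0 [::] l.
Proof.
move=> l Hl; apply: W_conv (subtree_nil t) _ l Hl.
apply: rel0; apply: (D_pos wf HE Hth Hmu HR0 (subtree_nil t)).
exact: root_sopp.
Qed.
End Cont.

Unset Implicit Arguments.
Set Strict Implicit.

Theorem lemma6 (R : realType) (t : tree) (Th : set R) (A : R -> R) (th : R)
  (mu : seq nat -> R) :
  wf_tree t ->
  expfam Th A ->
  meanset Th A th ->
  (forall l, l \in leaves t -> meanset Th A (mu l)) ->
  gval t mu != th ->
  (exists w, is_maximizer t (meanset Th A) (kl Th A) th mu w) ->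
  (forall w1 w2, is_maximizer t (meanset Th A) (kl Th A) th mu w1 ->
                 is_maximizer t (meanset Th A) (kl Th A) th mu w2 ->
                 forall l, l \in leaves t -> w1 l = w2 l) ->
  forall eps : R, 0 < eps ->
  exists2 xi : R, 0 < xi &
    forall mu' : seq nat -> R,
      (forall l, l \in leaves t ->
         meanset Th A (mu' l) /\ mu l - xi <= mu' l <= mu l + xi) ->
      forall (D D' : seq nat -> R) (W W' : seq nat -> seq nat -> R),
        rec_weights t (kl Th A) th mu D W ->
        rec_weights t (kl Th A) th mu' D' W' ->
        forall l, l \in leaves t -> `|W' [::] l - W [::] l| < eps.
Proof.
move=> wf HE Hth Hmu Hne _ Huniq eps He.
case: (pselect (exists D0 W0, rec_weights t (kl Th A) th mu D0 W0)) => [[D0 [W0 HR0]]|Hno]; last first.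
  by exists 1 => // mu' _ D D' W W' HR; exfalso; apply: Hno; exists D, W.
have He2 : 0 < eps / 2 by apply: divr_gt0.
have Hall := near_forall_seq (r := leaves t)
  (P := fun l (z : TT R) => `|W0 [::] l - z.2 [::] l| < eps / 2)
  (fun l Hl => convE (root_conv wf HE Hth Hmu HR0 Hne Huniq Hl) He2).
case: Hall => xi xi0 Hxi; exists xi => // mu' Hmu' D D' W W' HR HR' l Hl.
have H1 := Hxi (mu', D', W') Hmu' HR' l Hl.
have Hc : close t Th A mu xi mu.
  by move=> l' Hl'; split; [exact: Hmu | apply/andP; split; lra].
have H2 := Hxi (mu, D, W) Hc HR l Hl.
move: H1 H2 => /=; rewrite !ltr_norml => /andP[? ?] /andP[? ?].
by apply/andP; split; lra.
Qed.
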